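(* Let $\mathcal{C}$ be a regular category, $n \ge 0$, and consider a belief cycle \[ A \xrightarrow{R_1} A_1 \xrightarrow{R_2} \cdots \xrightarrow{R_n} A_n \xrightarrow{R_{n+1}} A \] where each $R_k$ is a subobject of the product of its source and target (with $A_0 = A_{n+1} = A$). Suppose that for each subobject $p$ of $A$ there is $c : \mathbf{1} \to A$ such that, writing $y_0 = c$, the following regular sequents are valid in $\mathcal{C}$ (variables $y_k$ of sort $A_k$, $x$ of sort $A$): (i) $R_1(y_0,y_1) \wedge \cdots \wedge R_n(y_{n-1},y_n) \wedge R_{n+1}(y_n,x) \vdash p(x)$; (ii) $R_1(y_0,y_1) \wedge \cdots \wedge R_n(y_{n-1},y_n) \wedge p(x) \vdash R_{n+1}(y_n,x)$; (iii) for each $k = 1,\dots,n$: $R_1(y_0,y_1) \wedge \cdots \wedge R_{k-1}(y_{k-2},y_{k-1}) \vdash \exists y_k.\, R_k(y_{k-1},y_k)$; (i.e. $c \models \Box_1\cdots\Box_n \boxplus_{n+1} p \wedge \Diamond_1\top \wedge \Box_1\Diamond_2\top \wedge\cdots\wedge \Box_1\cdots\Box_{n-1}\Diamond_n\top$). Let $R = R_1;\cdots;R_{n+1}$ be the relational composite, the subobject of $A\times A$ interpreting $\exists y_1\cdots\exists y_n.\,[R_1(x,y_1)\wedge R_2(y_1,y_2)\wedge\cdots\wedge R_{n+1}(y_n,x')]$. Then $R$ is very weakly point surjective: for every subobject $p$ of $A$ there is $c:\mathbf{1}\to A$ with $\langle c,c\rangle^*(R) = c^*(p)$ in $\mathsf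{Sub}(\mathbf{1})$.
   Context: A regular category is a well-powered category with finite limits and images stable under pullback, with terminal object $\mathbf{1}$; $\mathsf{Sub}(A)$ is the poset of subobjects of $A$ and $f^*$ is pullback along $f$. Regular formulas are interpreted as subobjects (relation symbols by the given subobjects, substitution by pullback, conjunction by meet, $\exists$ along projections by the left adjoint to pullback); a sequent $\phi\vdash\psi$ in the listed variables is valid if $[\![\phi]\!]\le[\![\psi]\!]$ in the subobject poset of the product of the sorts of the variables. The modalities: $x\models\Box_k\phi$ iff $\forall y.\,R_k(x,y)\Rightarrow \phi(y)$; $x\models\boxplus_k\phi$ iff $\forall y.\,R_k(x,y)\Leftrightarrow\phi(y)$; $x\models\Diamond_k\top$ iff $\exists y.\,R_k(x,y)$. *)

(* Defs.v *)
Set Implicit Arguments.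
Unset Strict Implicit.

Record Category := {
  ob :> Type;
  hom : ob -> ob -> Type;
  idm : forall A, hom A A;
  comp : forall A B C, hom B C -> hom A B -> hom A C;
  comp_idl : forall A B (f : hom A B), comp (idm B) f = f;
  comp_idr : forall A B (f : hom A B), comp f (idm A) = f;
  comp_assoc : forall A B C D (h : hom C D) (g : hom B C) (f : hom A B),
      comp h (comp g f) = comp (comp h g) f
}.
Arguments hom {c} _ _.
Arguments idm {c} _.
Arguments comp {c A B C} _ _.

Definition mono (C : Category) (A B : C) (f : hom A B) : Prop :=
  forall X (u v : hom X A), comp f u = comp f v -> u = v.

Definition factors (C : Category) (A B X : C) (f : hom A X) (g : hom B X) : Prop :=
  exists h : hom A B, comp g h = f.

(** Subobjects: monos into X, compared by factorization; the poset Sub(X)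
    is the quotient of this preorder, so equality in Sub(X) is [sub_eq]. *)
Record Sub (C : Category) (X : C) := {
  sdom : C;
  sarr : hom sdom X;
  smono : mono sarr
}.
Arguments sdom {C X} _.
Arguments sarr {C X} _.
Arguments smono {C X} _ : rename.

Definition sub_le (C : Category) (X : C) (m n : Sub X) : Prop :=
  factors (sarr m) (sarr n).
Definition sub_eq (C : Category) (X : C) (m n : Sub X) : Prop :=
  sub_le m n /\ sub_le n m.

(** * Regular categories:
   finite limits (terminal object, binary products, pullbacks),
   images (least subobject through which a map factors),
   images stable under pullback.  (Well-poweredness is a size condition
   with no content in type theory.) *)
Record RegCat := {
  cat :> Category;
  one : cat;
  bang : forall X : cat, hom X one;
  bang_uniq : forall X (f g : hom X one), f = g;
  prod : cat -> cat -> cat;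
  pfst : forall A B, hom (prod A B) A;
  psnd : forall A B, hom (prod A B) B;
  pair : forall X A B, hom X A -> hom X B -> hom X (prod A B);
  pair_fst : forall X A B (f : hom X A) (g : hom X B), comp (pfst A B) (pair f g) = f;
  pair_snd : forall X A B (f : hom X A) (g : hom X B), comp (psnd A B) (pair f g) = g;
  pair_uniq : forall X A B (h k : hom X (prod A B)),
      comp (pfst A B) h = comp (pfst A B) k -> comp (psnd A B) h = comp (psnd A B) k -> h = k;
  pb : forall A B Z, hom A Z -> hom B Z -> cat;
  pb1 : forall A B Z (f : hom A Z) (g : hom B Z), hom (pb f g) A;
  pb2 : forall A B Z (f : hom A Z) (g : hom B Z), hom (pb f g) B;
  pb_comm : forall A B Z (f : hom A Z) (g : hom B Z), comp f (pb1 f g) = comp g (pb2 f g);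
  pb_ex : forall A B Z (f : hom A Z) (g : hom B Z) Y (h : hom Y A) (k : hom Y B),
      comp f h = comp g k -> exists u : hom Y (pb f g), comp (pb1 f g) u = h /\ comp (pb2 f g) u = k;
  pb_uniq : forall A B Z (f : hom A Z) (g : hom B Z) Y (u v : hom Y (pb f g)),
      comp (pb1 f g) u = comp (pb1 f g) v -> comp (pb2 f g) u = comp (pb2 f g) v -> u = v;
  im : forall X A (f : hom A X), Sub X;
  im_fact : forall X A (f : hom A X), factors f (sarr (im f));
  im_least : forall X A (f : hom A X) (m : Sub X), factors f (sarr m) -> sub_le (im f) m;
  (* f^*(im g) = im (f^* g) *)
  im_stable : forall X Y A (f : hom X Y) (g : hom A Y),
      factors (sarr (im (pb1 f g))) (pb1 f (sarr (im g))) /\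
      factors (pb1 f (sarr (im g))) (sarr (im (pb1 f g)))
}.
Arguments one {r}.
Arguments bang {r} _.
Arguments prod {r} _ _.
Arguments pfst {r A B}.
Arguments psnd {r A B}.
Arguments pair {r X A B} _ _.
Arguments pb {r A B Z} _ _.
Arguments pb1 {r A B Z} _ _.
Arguments pb2 {r A B Z} _ _.
Arguments im {r X A} _.

Lemma pb1_mono (C : RegCat) (A B Z : C) (f : hom A Z) (g : hom B Z) :
  mono g -> mono (pb1 f g).
Proof.
  intros Hg X u v E. apply pb_uniq; [exact E|].
  apply Hg. rewrite !comp_assoc, <- !pb_comm, <- !comp_assoc, E. reflexivity.
Qed.

Arguments pb1_mono {C A B Z} f {g} _.

Lemma comp_mono (C : Category) (A B D : C) (g : hom B D) (f : hom A B) :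
  mono g -> mono f -> mono (comp g f).
Proof.
  intros Hg Hf X u v E. apply Hf, Hg. rewrite !comp_assoc. exact E.
Qed.

Lemma id_mono (C : Category) (A : C) : mono (idm A).
Proof. intros X u v E. rewrite !comp_idl in E. exact E. Qed.

Definition pbsub (C : RegCat) (X Y : C) (f : hom X Y) (m : Sub Y) : Sub X :=
  {| sdom := pb f (sarr m); sarr := pb1 f (sarr m); smono := pb1_mono f (smono m) |}.

Definition meet (C : RegCat) (X : C) (m n : Sub X) : Sub X :=
  {| sdom := pb (sarr m) (sarr n);
     sarr := comp (sarr m) (pb1 (sarr m) (sarr n));
     smono := comp_mono (smono m) (pb1_mono (sarr m) (smono n)) |}.

Definition top (C : RegCat) (X : C) : Sub X :=
  {| sdom := X; sarr := idm X; smono := @id_mono C X |}.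

Definition exs (C : RegCat) (X Y : C) (f : hom X Y) (m : Sub X) : Sub Y :=
  im (comp f (sarr m)).

(** * Belief cycles  A -R_1-> A_1 -> ... -> A_n -R_{n+1}-> A.
   Objects: A_0 = A, A_{k+1} = Bs k.  Relations R_{k+1} = Rs k : Sub (A_k x A_{k+1})
   for k < n, and R_{n+1} = Rlast : Sub (A_n x A). *)
Definition Aobj (C : RegCat) (A : C) (Bs : nat -> C) (k : nat) : C :=
  match k with 0 => A | S j => Bs j end.

(** Context  X x A_1 x ... x A_k  (variables y_1..y_k over a base X). *)
Fixpoint Ctx (C : RegCat) (A : C) (Bs : nat -> C) (X : C) (k : nat) : C :=
  match k with
  | 0 => X
  | S j => prod (Ctx A Bs X j) (Aobj A Bs (S j))
  end.

(** the last variable y_k of the context; y_0 is given by s : X -> A *)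
Definition lastv (C : RegCat) (A : C) (Bs : nat -> C) (X : C) (s : hom X A) (k : nat)
  : hom (Ctx A Bs X k) (Aobj A Bs k) :=
  match k as k0 return hom (Ctx A Bs X k0) (Aobj A Bs k0) with
  | 0 => s
  | S j => psnd
  end.

Fixpoint basev (C : RegCat) (A : C) (Bs : nat -> C) (X : C) (k : nat)
  : hom (Ctx A Bs X k) X :=
  match k as k0 return hom (Ctx A Bs X k0) X with
  | 0 => idm X
  | S j => comp (basev A Bs X j) pfst
  end.

(** R_1(y_0,y_1) /\ ... /\ R_k(y_{k-1},y_k)  as a subobject of the context *)
Fixpoint chain (C : RegCat) (A : C) (Bs : nat -> C)
    (Rs : forall k, Sub (prod (Aobj A Bs k) (Aobj A Bs (S k))))
    (X : C) (s : hom X A) (k : nat) : Sub (Ctx A Bs X k) :=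
  match k as k0 return Sub (Ctx A Bs X k0) with
  | 0 => top X
  | S j => meet (pbsub pfst (chain Rs s j))
                (pbsub (pair (comp (lastv Bs s j) pfst) psnd) (Rs j))
  end.

(** R_1(y_0,y_1) /\ ... /\ R_n(y_{n-1},y_n) /\ R_{n+1}(y_n,x)
    in context (X x A_1 x ... x A_n) x A *)
Definition fullchain (C : RegCat) (A : C) (Bs : nat -> C) (n : nat)
    (Rs : forall k, Sub (prod (Aobj A Bs k) (Aobj A Bs (S k))))
    (Rlast : Sub (prod (Aobj A Bs n) A))
    (X : C) (s : hom X A) : Sub (prod (Ctx A Bs X n) A) :=
  meet (pbsub pfst (chain Rs s n))
       (pbsub (pair (comp (lastv Bs s n) pfst) psnd) Rlast).

(** Relational composite R_1;...;R_{n+1} : Sub (A x A), interpreting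
    exists y_1..y_n. R_1(x,y_1) /\ ... /\ R_{n+1}(y_n,x') *)
Definition rel_composite (C : RegCat) (A : C) (Bs : nat -> C) (n : nat)
    (Rs : forall k, Sub (prod (Aobj A Bs k) (Aobj A Bs (S k))))
    (Rlast : Sub (prod (Aobj A Bs n) A)) : Sub (prod A A) :=
  exs (pair (comp (basev A Bs A n) pfst) psnd) (fullchain Rs Rlast (idm A)).

Definition belief_hyp (C : RegCat) (A : C) (Bs : nat -> C) (n : nat)
    (Rs : forall k, Sub (prod (Aobj A Bs k) (Aobj A Bs (S k))))
    (Rlast : Sub (prod (Aobj A Bs n) A)) (p : Sub A) (c : hom one A) : Prop :=
  sub_le (fullchain Rs Rlast c) (pbsub psnd p) /\
  sub_le (meet (pbsub pfst (chain Rs c n)) (pbsub psnd p))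
         (pbsub (pair (comp (lastv Bs c n) pfst) psnd) Rlast) /\
  (* (iii) for k = j+1, j < n *)
  (forall j, j < n ->
     sub_le (chain Rs c j)
            (exs pfst (pbsub (pair (comp (lastv Bs c j) pfst) psnd) (Rs j)))).

Definition very_weakly_point_surjective (C : RegCat) (A : C) (R : Sub (prod A A)) : Prop :=
  forall p : Sub A, exists c : hom one A, sub_eq (pbsub (pair c c) R) (pbsub c p).

(* Main.v *)
Require Import Defs.
From Stdlib Require Import Lia.
Set Implicit Arguments.
Unset Strict Implicit.

Definition sat (C : RegCat) (X T : C) (m : Sub X) (x : hom T X) : Prop := factors x (sarr m).

Lemma sat_comp (C:RegCat) (X T U : C) (m : Sub X) (x : hom T X) (h : hom U T) :
  sat m x -> sat m (comp x h).
Proof. intros [u Hu]. exists (comp u h). rewrite comp_assoc, Hu. reflexivity. Qed.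

Lemma sat_le (C:RegCat) (X T:C) (m n : Sub X) (x : hom T X) : sub_le m n -> sat m x -> sat n x.
Proof. intros [a Ha] [u Hu]. exists (comp a u). rewrite comp_assoc, Ha, Hu. reflexivity. Qed.

Lemma sat_self (C:RegCat) (X:C) (m : Sub X) : sat m (sarr m).
Proof. exists (idm _). apply comp_idr. Qed.

Lemma sat_top (C:RegCat) (X T:C) (x : hom T X) : sat (top X) x.
Proof. exists x. simpl. apply comp_idl. Qed.

Lemma sat_pb (C:RegCat) (X Y T : C) (f : hom X Y) (m : Sub Y) (x : hom T X) :
  sat (pbsub f m) x <-> sat m (comp f x).
Proof. split.
 - intros [u Hu]. exists (comp (pb2 f (sarr m)) u). simpl in Hu.
   rewrite comp_assoc, <- pb_comm, <- comp_assoc, Hu. reflexivity.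
 - intros [u Hu]. destruct (pb_ex (eq_sym Hu)) as [v [H1 H2]]. exists v. exact H1.
Qed.

Lemma sat_meet (C:RegCat) (X T:C) (m n : Sub X) (x : hom T X) :
  sat (meet m n) x <-> sat m x /\ sat n x.
Proof. split.
 - intros [u Hu]. simpl in Hu. split.
   + exists (comp (pb1 (sarr m) (sarr n)) u). rewrite comp_assoc. exact Hu.
   + exists (comp (pb2 (sarr m) (sarr n)) u). rewrite comp_assoc, <- pb_comm. exact Hu.
 - intros [[a Ha] [b Hb]].
   assert (E : comp (sarr m) a = comp (sarr n) b) by (rewrite Ha, Hb; reflexivity).
   destruct (pb_ex E) as [v [H1 H2]].
   exists v. simpl. rewrite <- comp_assoc, H1. exact Ha.
Qed.

Lemma pair_comp (C:RegCat) (X Y P Q : C) (f : hom X P) (g : hom X Q) (h : hom Y X) :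
  comp (pair f g) h = pair (comp f h) (comp g h).
Proof. apply pair_uniq; rewrite ?comp_assoc, ?pair_fst, ?pair_snd; reflexivity. Qed.

Definition cover (C:RegCat) (T Y : C) (t : hom T Y) : Prop := factors (idm Y) (sarr (im t)).

Lemma cover_factor (C:RegCat) (T Y Z: C) (t : hom T Y) (h : hom Y Z) (m : Sub Z) :
  cover t -> factors (comp h t) (sarr m) -> factors h (sarr m).
Proof. intros [a Ha] [u Hu].
 destruct (pb_ex (eq_sym Hu)) as [v [H1 H2]].
 assert (Hl : sub_le (im t) (pbsub h m)). { apply im_least. exists v. exact H1. }
 destruct Hl as [b Hb]. simpl in Hb.
 exists (comp (pb2 h (sarr m)) (comp b a)).
 rewrite comp_assoc, <- pb_comm, <- comp_assoc. transitivity (comp h (comp (comp (pb1 h (sarr m)) b) a)); [f_equal; apply comp_assoc|]. rewrite Hb, Ha, comp_idr.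
 reflexivity.
Qed.

Lemma cover_id (C:RegCat) (Y : C) : cover (idm Y).
Proof. destruct (im_fact (idm Y)) as [h Hh]. exists h. exact Hh. Qed.

Lemma cover_compose (C:RegCat) (T1 T2 T3 : C) (t1 : hom T1 T2) (t2 : hom T2 T3) :
  cover t1 -> cover t2 -> cover (comp t2 t1).
Proof. intros H1 H2. apply (cover_factor H2). rewrite comp_idl.
  apply (cover_factor H1). apply im_fact. Qed.

Lemma exs_elim (C:RegCat) (X B T : C) (g : hom B X) (w : hom T X) :
  factors w (sarr (im g)) -> exists T' (t : hom T' T) (y : hom T' B), cover t /\ comp w t = comp g y.
Proof. intros [a Ha]. exists (pb w g), (pb1 w g), (pb2 w g). split; [|apply pb_comm].
  destruct (im_stable w g) as [_ [b Hb]].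
  assert (E : comp w (idm T) = comp (sarr (im g)) a) by (rewrite comp_idr; auto).
  destruct (pb_ex E) as [u [H1 H2]].
  exists (comp b u). rewrite comp_assoc, Hb, H1. reflexivity.
Qed.

Fixpoint agree (C:RegCat) (A:C) (Bs: nat -> C) (X Y : C) (s : hom X A) (s' : hom Y A) (T : C) (k : nat)
  : hom T (Ctx A Bs X k) -> hom T (Ctx A Bs Y k) -> Prop :=
  match k as k0 return hom T (Ctx A Bs X k0) -> hom T (Ctx A Bs Y k0) -> Prop with
  | 0 => fun w w' => comp s w = comp s' w'
  | S j => fun w w' => @agree C A Bs X Y s s' T j (comp pfst w) (comp pfst w') /\ comp psnd w = comp psnd w'
  end.

Lemma lastv_agree (C:RegCat) (A:C) (Bs: nat -> C) (X Y : C) (s : hom X A) (s' : hom Y A) (T : C) k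
  (w : hom T (Ctx A Bs X k)) w' :
  @agree C A Bs X Y s s' T k w w' -> comp (lastv Bs s k) w = comp (lastv Bs s' k) w'.
Proof. destruct k; simpl; tauto. Qed.

Lemma chain_agree (C:RegCat) (A:C) (Bs: nat -> C)
  (Rs : forall k, Sub (prod (Aobj A Bs k) (Aobj A Bs (S k))))
  (X Y : C) (s : hom X A) (s' : hom Y A) k : forall (T : C)
  (w : hom T (Ctx A Bs X k)) w',
  @agree C A Bs X Y s s' T k w w' -> sat (chain Rs s k) w -> sat (chain Rs s' k) w'.
Proof. induction k; intros T w w' Ha Hs.
 - apply sat_top.
 - simpl in Ha. destruct Ha as [Ha1 Ha2]. simpl chain in *.
   apply sat_meet in Hs. destruct Hs as [Hs1 Hs2].
   apply sat_pb in Hs1. apply sat_pb in Hs2. apply sat_meet. split; apply sat_pb.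
   + exact (IHk _ _ _ Ha1 Hs1).
   + rewrite pair_comp, <- comp_assoc in *. refine (eq_ind _ (fun z => sat (Rs k) z) Hs2 _ _). f_equal; [apply lastv_agree; exact Ha1 | exact Ha2].
Qed.

Fixpoint rebase (C:RegCat) (A:C) (Bs: nat -> C) (X Y T : C) (k : nat)
  : hom T (Ctx A Bs X k) -> hom T Y -> hom T (Ctx A Bs Y k) :=
  match k as k0 return hom T (Ctx A Bs X k0) -> hom T Y -> hom T (Ctx A Bs Y k0) with
  | 0 => fun w b => b
  | S j => fun w b => pair (@rebase C A Bs X Y T j (comp pfst w) b) (comp psnd w)
  end.

Lemma rebase_agree (C:RegCat) (A:C) (Bs: nat -> C) (X Y : C) (s : hom X A) (s' : hom Y A) (T : C) k :
  forall (w : hom T (Ctx A Bs X k)) (b : hom T Y),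
  comp s (comp (basev A Bs X k) w) = comp s' b ->
  @agree C A Bs X Y s s' T k w (@rebase C A Bs X Y T k w b).
Proof. induction k; intros w b H.
 - simpl in *. rewrite comp_idl in H. exact H.
 - simpl. rewrite pair_fst, pair_snd. split; [|reflexivity].
   apply IHk. simpl in H. rewrite <- (comp_assoc (basev A Bs X k)) in H. exact H.
Qed.

Lemma basev_rebase (C:RegCat) (A:C) (Bs: nat -> C) (X Y T : C) k :
  forall (w : hom T (Ctx A Bs X k)) (b : hom T Y),
  comp (basev A Bs Y k) (@rebase C A Bs X Y T k w b) = b.
Proof. induction k; intros w b; simpl.
 - apply comp_idl.
 - rewrite <- comp_assoc, pair_fst. apply IHk.
Qed.

Theorem lemma8 (C : RegCat) (n : nat) (A : C) (Bs : nat -> C)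
    (Rs : forall k, Sub (prod (Aobj A Bs k) (Aobj A Bs (S k))))
    (Rlast : Sub (prod (Aobj A Bs n) A)) :
  (forall p : Sub A, exists c : hom one A, belief_hyp Rs Rlast p c) ->
  very_weakly_point_surjective (rel_composite Rs Rlast).
Proof.
  intros H p. destruct (H p) as [c [Hi [Hii Hiii]]]. exists c.
  set (F := fullchain Rs Rlast (idm A)).
  set (pi := @pair C (prod (Ctx A Bs A n) A) A A (comp (basev A Bs A n) pfst) psnd).
  set (g := comp pi (sarr F)).
  change (sub_eq (pbsub (pair c c) (im g)) (pbsub c p)).
  split.
  - unfold sub_le. simpl.
    destruct (im_stable (pair c c) g) as [_ [a Ha]].
    assert (Hle : sub_le (im (pb1 (pair c c) g)) (pbsub c p)).
    { apply im_least. apply sat_pb.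
      set (q1 := pb1 (pair c c) g). set (q2 := pb2 (pair c c) g).
      set (z := comp (sarr F) q2).
      assert (Hz : sat F z) by (apply sat_comp, sat_self).
      assert (Hpz : comp pi z = comp (pair c c) q1).
      { unfold z. rewrite comp_assoc. symmetry. apply pb_comm. }
      assert (Hb1 : comp (basev A Bs A n) (comp pfst z) = comp c (bang _)).
      { pose proof (f_equal (comp pfst) Hpz) as E.
        rewrite !comp_assoc, !pair_fst, <- comp_assoc in E. unfold pi in E. rewrite comp_assoc, pair_fst, <- comp_assoc in E. rewrite E.
        f_equal. apply bang_uniq. }
      assert (Hs : comp psnd z = comp c (bang _)).
      { pose proof (f_equal (comp psnd) Hpz) as E.
        rewrite !comp_assoc, !pair_snd in E. unfold pi in E. rewrite pair_snd in E. rewrite E.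
        f_equal. apply bang_uniq. }
      set (w' := @rebase C A Bs A one _ n (comp pfst z) (bang _)).
      assert (Hag : @agree C A Bs A one (idm A) c _ n (comp pfst z) w').
      { apply rebase_agree. rewrite comp_idl. exact Hb1. }
      set (z2 := @pair C _ _ _ w' (comp psnd z)).
      assert (Hz2 : sat (fullchain Rs Rlast c) z2).
      { unfold F, fullchain in Hz. destruct (proj1 (sat_meet _ _ z) Hz) as [Hz1 Hz2].
        apply (proj1 (sat_pb _ _ z)) in Hz1. apply (proj1 (sat_pb _ _ z)) in Hz2.
        apply sat_meet. split; apply sat_pb.
        - unfold z2. rewrite pair_fst. exact (chain_agree Hag Hz1).
        - unfold z2. rewrite pair_comp, <- comp_assoc, pair_fst, pair_snd.
          rewrite pair_comp, <- comp_assoc in Hz2.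
          rewrite <- (lastv_agree Hag). exact Hz2. }
      pose proof (sat_le Hi Hz2) as Hp. apply sat_pb in Hp.
      unfold z2 in Hp. rewrite pair_snd, Hs in Hp.
      replace q1 with (bang (pb (pair c c) g)) by apply bang_uniq. exact Hp. }
    destruct Hle as [b Hb]. simpl in Hb. exists (comp b a). transitivity (comp (comp (pb1 c (sarr p)) b) a); [apply comp_assoc|]. etransitivity; [|exact Ha]. exact (f_equal (fun h => comp h a) Hb).
  - assert (Hit : forall k, k <= n -> exists T (t : hom T (pb c (sarr p)))
               (w : hom T (Ctx A Bs one k)), cover t /\ sat (chain Rs c k) w).
    { induction k as [|k IH]; intros Hk.
      - exists (pb c (sarr p)), (idm _), (pb1 c (sarr p)). split; [apply cover_id | apply sat_top].
      - destruct (IH ltac:(lia)) as [T [t [w [Ht Hw]]]].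
        pose proof (sat_le (Hiii k ltac:(lia)) Hw) as Hex.
        destruct (exs_elim Hex) as [T' [t' [y [Ht' Ey]]]].
        exists T', (comp t t').
        set (M := pbsub (pair (comp (lastv Bs c k) pfst) psnd) (Rs k)).
        exists (comp (sarr M) y). split; [exact (cover_compose Ht' Ht)|].
        change (sat (meet (pbsub pfst (chain Rs c k)) M) (comp (sarr M) y)).
        apply (proj2 (sat_meet _ _ _)). split; apply (proj2 (sat_pb _ _ _)).
        + refine (eq_ind _ (fun z => sat _ z) (sat_comp t' Hw) _ _).
          transitivity (comp (comp pfst (sarr M)) y); [exact Ey | symmetry; apply comp_assoc].
        + apply (proj1 (sat_pb _ _ _)). apply sat_comp, sat_self. }
    destruct (Hit n (le_n n)) as [T [t [w [Ht Hw]]]].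
    set (e := pb1 c (sarr p)).
    assert (Het : bang T = comp e t) by apply bang_uniq.
    set (z := @pair C T _ A w (comp c (bang T))).
    assert (Hcp : sat p (comp c (bang T))).
    { rewrite Het, comp_assoc. apply sat_comp. exists (pb2 c (sarr p)).
      symmetry. apply pb_comm. }
    assert (Hz : sat (pbsub (pair (comp (lastv Bs c n) pfst) psnd) Rlast) z).
    { apply (sat_le Hii). apply (proj2 (sat_meet _ _ _)). split; apply (proj2 (sat_pb _ _ _)).
      - unfold z. rewrite pair_fst. exact Hw.
      - unfold z. rewrite pair_snd. exact Hcp. }
    apply (proj1 (sat_pb _ _ _)) in Hz.
    set (w' := @rebase C A Bs one A T n w (comp c (bang T))).
    assert (Hag : @agree C A Bs one A c (idm A) T n w w').
    { apply rebase_agree. rewrite comp_idl. f_equal. apply bang_uniq. }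
    set (z' := @pair C T _ A w' (comp c (bang T))).
    assert (Hz' : sat F z').
    { unfold F, fullchain. apply (proj2 (sat_meet _ _ _)). split; apply (proj2 (sat_pb _ _ _)).
      - unfold z'. rewrite pair_fst. exact (chain_agree Hag Hw).
      - unfold z'. rewrite pair_comp, <- comp_assoc, pair_fst, pair_snd.
        unfold z in Hz. rewrite pair_comp, <- comp_assoc, pair_fst, pair_snd in Hz.
        rewrite <- (lastv_agree Hag). exact Hz. }
    destruct Hz' as [y Hy].
    assert (Hg : factors (comp (comp (pair c c) e) t) (sarr (im g))).
    { destruct (im_fact g) as [h Hh]. exists (comp h y).
      rewrite comp_assoc, Hh. unfold g. rewrite <- comp_assoc, Hy.
      unfold pi, z'. rewrite pair_comp, <- comp_assoc, pair_fst, pair_snd.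
      unfold w'. rewrite basev_rebase. rewrite <- comp_assoc, <- Het, pair_comp. reflexivity. }
    destruct (cover_factor Ht Hg) as [u Hu].
    destruct (pb_ex (eq_sym Hu)) as [v [Hv1 Hv2]].
    exists v. exact Hv1.
Qed.
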